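(* Let $\mathbf V$ be an $n$-dimensional $\mathbb Q(v,t)$-vector space with basis $\mathbf v_1,\dots,\mathbf v_n$, and for $\mathbf r=(r_1,\dots,r_d)\in[1,n]^d$ write $\mathbf v_{\mathbf r}=\mathbf v_{r_1}\otimes\cdots\otimes\mathbf v_{r_d}$. The formula, for $1\le j\le d-1$, $$\mathbf v_{r_1\cdots r_d}T_j=\begin{cases}\mathbf v_{r_1\cdots r_{j-1}r_{j+1}r_j\cdots r_d}, & r_j<r_{j+1},\\ vt\,\mathbf v_{r_1\cdots r_d}, & r_j=r_{j+1},\\ (vt-v^{-1}t)\mathbf v_{r_1\cdots r_d}+t^2\mathbf v_{r_1\cdots r_{j-1}r_{j+1}r_j\cdots r_d}, & r_j>r_{j+1},\end{cases}$$ extended linearly, defines a right action of $H_d(v,t)$ on $\mathbf V^{\otimes d}$.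
   Context: The two-parameter Iwahori–Hecke algebra $H_d(v,t)$ is the unital associative $\mathbb Q(v,t)$-algebra generated by $T_1,\dots,T_{d-1}$ subject to $T_i^2=(vt-v^{-1}t)T_i+t^2$ ($1\le i\le d-1$), $T_jT_{j+1}T_j=T_{j+1}T_jT_{j+1}$ ($1\le j\le d-2$), $T_iT_j=T_jT_i$ ($|i-j|>1$). *)

(* Defs.v *)
From HB Require Import structures.
From mathcomp Require Import all_boot all_order all_algebra.
From mathcomp Require Import fraction perm.
Set Implicit Arguments. Unset Strict Implicit. Unset Printing Implicit Defensive.
Import GRing.Theory.
Local Open Scope ring_scope.

(* The field Q(v,t): fractions of Q[v][t] = {poly {poly rat}}. *)
Notation Qvt := {fraction {poly {poly rat}}}.
Definition hv : Qvt := tofrac (('X : {poly rat})%:P).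
Definition ht : Qvt := tofrac ('X : {poly {poly rat}}).

(* Multi-indices r = (r_1,...,r_d) in [1,n]^d, 0-indexed positions/values. *)
Notation Idx n d := {ffun 'I_d -> 'I_n}.
(* V^{(x)d}: coordinates w.r.t. the basis v_r, r in [1,n]^d. *)
Notation Ten n d := {ffun Idx n d -> Qvt^o}.

Definition tbasis n d (r : Idx n d) : Ten n d := [ffun s => (s == r)%:R].

Definition swapIdx n d (a b : 'I_d) (r : Idx n d) : Idx n d :=
  [ffun k => r (tperm a b k)].

(* v_r T_j, where positions a = j-1 and b = j (0-indexed) are adjacent *)
Definition Tbas n d (a b : 'I_d) (r : Idx n d) : Ten n d :=
  if (r a < r b)%N then tbasis (swapIdx a b r)
  else if r a == r b then (hv * ht) *: tbasis r
  else (hv * ht - hv^-1 * ht) *: tbasis r + ht ^+ 2 *: tbasis (swapIdx a b r).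

Definition actT n d (a b : 'I_d) (x : Ten n d) : Ten n d :=
  \sum_(r : Idx n d) x r *: Tbas a b r.

(* Main.v *)
Require Import Defs.
From HB Require Import structures.
From mathcomp Require Import all_boot all_order all_algebra.
From mathcomp Require Import fraction perm.
From mathcomp Require Import ring zify.
Import GRing.Theory.
Local Open Scope ring_scope.

Lemma hv_neq0 : hv != 0.
Proof. by rewrite /hv tofrac_eq0 polyC_eq0 polyX_eq0. Qed.

Definition AF (F : fieldType) (V T : F) n (x y : 'I_n) : F :=
  if (x < y)%N then 0 else if (x == y :> nat) then V * T else V * T - V^-1 * T.
Definition BF (F : fieldType) (V T : F) n (x y : 'I_n) : F :=
  if (y < x)%N then 1 else if (x == y :> nat) then 0 else T ^+ 2.
Arguments AF {F} V T {n}.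
Arguments BF {F} V T {n}.

Lemma quad_alg (F : fieldType) (V T : F) (hV : V != 0) n (p q : 'I_n) (y z : F) :
  AF V T p q * (AF V T p q * y + BF V T p q * z) +
  BF V T p q * (AF V T q p * z + BF V T q p * y) =
  (V * T - V^-1 * T) * (AF V T p q * y + BF V T p q * z) + T ^+ 2 * y.
Proof.
rewrite /AF /BF [(q == p :> nat)]eq_sym.
by case: ltngtP => H; cbv iota; field.
Qed.

Lemma braid_alg (F : fieldType) (V T : F) (hV : V != 0) n (p q r : 'I_n)
  (X : 'I_n -> 'I_n -> 'I_n -> F) :
  let A := @AF F V T n in let B := @BF F V T n in
  let Hab (f : 'I_n -> 'I_n -> 'I_n -> F) x y z := A x y * f x y z + B x y * f y x z in
  let Hbc (f : 'I_n -> 'I_n -> 'I_n -> F) x y z := A y z * f x y z + B y z * f x z y in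
  Hab (Hbc (Hab X)) p q r = Hbc (Hab (Hbc X)) p q r.
Proof.
move=> A B Hab Hbc; rewrite /Hab /Hbc /A /B /AF /BF.
case: (ltngtP p q) => C1; case: (ltngtP q r) => C2; case: (ltngtP p r) => C3;
  try (exfalso; lia);
  try (move/ord_inj: C1 => E; subst);
  try (move/ord_inj: C2 => E; subst);
  try (move/ord_inj: C3 => E; subst);
  cbv iota; field; done.
Qed.

Lemma comm_alg (R : comRingType) (A1 B1 A2 B2 y1 y2 y3 y4 : R) :
  A2 * (A1 * y1 + B1 * y2) + B2 * (A1 * y3 + B1 * y4) =
  A1 * (A2 * y1 + B2 * y3) + B1 * (A2 * y2 + B2 * y4).
Proof. ring. Qed.

Definition Ac n := @AF Qvt hv ht n.
Definition Bc n := @BF Qvt hv ht n.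

Arguments Ac {n}.
Arguments Bc {n}.

Lemma swapK n d (a b : 'I_d) (r : Idx n d) : swapIdx a b (swapIdx a b r) = r.
Proof. by apply/ffunP => k; rewrite !ffunE tpermK. Qed.

Lemma swapE n d (a b : 'I_d) (r : Idx n d) : swapIdx a b r a = r b /\ swapIdx a b r b = r a.
Proof. by rewrite !ffunE tpermL tpermR. Qed.

Lemma Tbas_unif n d (a b : 'I_d) (r : Idx n d) :
  Tbas a b r = Ac (r a) (r b) *: tbasis r + Bc (r b) (r a) *: tbasis (swapIdx a b r).
Proof.
rewrite /Tbas /Ac /Bc /AF /BF -val_eqE /= [(r b == r a :> nat)]eq_sym.
case: ltngtP => H; rewrite ?scale0r ?add0r ?scale1r ?addr0 //.
Qed.

Lemma addE n d (f g : Ten n d) s : (f + g) s = f s + g s.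
Proof. by rewrite ffunE. Qed.
Lemma sclE n d (k : Qvt) (f : Ten n d) s : (k *: f) s = k * f s.
Proof. by rewrite ffunE. Qed.
Lemma tbE n d (r s : Idx n d) : tbasis r s = (s == r)%:R.
Proof. by rewrite ffunE. Qed.

Lemma TbasE n d (a b : 'I_d) (r s : Idx n d) :
  Tbas a b r s = Ac (r a) (r b) * (s == r)%:R + Bc (r b) (r a) * (s == swapIdx a b r)%:R.
Proof.
rewrite Tbas_unif.
rewrite addE {1}sclE {1}sclE !tbE.
by [].
Qed.

Lemma actT_pt n d (a b : 'I_d) (x : Ten n d) (s : Idx n d) :
  actT a b x s = Ac (s a) (s b) * x s + Bc (s a) (s b) * x (swapIdx a b s).
Proof.
rewrite /actT sum_ffunE.
rewrite (eq_bigr (fun r => x r * Ac (r a) (r b) * (s == r)%:R +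
   x r * Bc (r b) (r a) * (s == swapIdx a b r)%:R)); last first.
  by move=> r _; rewrite sclE TbasE mulrDr !mulrA.
rewrite big_split /=.
rewrite (bigD1 s) //= big1; last first.
  by move=> r /negbTE Hr; rewrite eq_sym Hr /= mulr0.
rewrite (bigD1 (swapIdx a b s)) //= big1; last first.
  move=> r Hr; have -> : (s == swapIdx a b r) = false.
    apply/negbTE; apply: contra Hr => /eqP ->; by rewrite swapK.
  by rewrite /= mulr0.
have [E1 E2] := @swapE n d a b s.
rewrite swapK !eqxx E1 E2 !addr0 /= !mulr1.
by rewrite [_ * Ac _ _]mulrC [_ * Bc _ _]mulrC.
Qed.

Definition Tp n d (a b : 'I_d) (f : Idx n d -> Qvt) (s : Idx n d) : Qvt :=
  Ac (s a) (s b) * f s + Bc (s a) (s b) * f (swapIdx a b s).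

Arguments Tp {n d}.

Lemma actT_Tp n d (a b : 'I_d) (x : Ten n d) (f : Idx n d -> Qvt) :
  (forall s, x s = f s) -> forall s, actT a b x s = Tp a b f s.
Proof. by move=> H s; rewrite actT_pt /Tp !H. Qed.
Arguments actT_Tp {n d}.

Ltac expT := repeat match goal with
  |- context [@fun_of_fin _ _ _ (actT ?a ?b ?x) ?s] => rewrite (@actT_pt _ _ a b x s) end.

Section Braid.
Variables (n d : nat) (a b c : 'I_d).
Hypotheses (hab : a != b) (hbc : b != c) (hac : a != c).

Definition upd (s : Idx n d) (x y z : 'I_n) : Idx n d :=
  [ffun k => if k == a then x else if k == b then y else if k == c then z else s k].

Let hba : b != a. Proof. by rewrite eq_sym. Qed.
Let hcb : c != b. Proof. by rewrite eq_sym. Qed.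
Let hca : c != a. Proof. by rewrite eq_sym. Qed.

Lemma upd_a s x y z : upd s x y z a = x.
Proof. by rewrite ffunE eqxx. Qed.
Lemma upd_b s x y z : upd s x y z b = y.
Proof. by rewrite ffunE eqxx (negbTE hba). Qed.
Lemma upd_c s x y z : upd s x y z c = z.
Proof. by rewrite ffunE eqxx (negbTE hca) (negbTE hcb). Qed.

Lemma upd_eta s : upd s (s a) (s b) (s c) = s.
Proof.
apply/ffunP => k; rewrite ffunE.
by case: eqP => [->|_]; [|case: eqP => [->|_]; [|case: eqP => [->|_]]].
Qed.

Lemma swap_ab s x y z : swapIdx a b (upd s x y z) = upd s y x z.
Proof.
apply/ffunP => k; rewrite !ffunE.
case: tpermP => [->|->|/eqP Ha /eqP Hb].
- by rewrite eqxx (negbTE hba) eqxx.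
- by rewrite eqxx (negbTE hba) eqxx.
- by rewrite (negbTE Ha) (negbTE Hb).
Qed.

Lemma swap_bc s x y z : swapIdx b c (upd s x y z) = upd s x z y.
Proof.
apply/ffunP => k; rewrite !ffunE.
case: tpermP => [->|->|/eqP Ha /eqP Hb].
- by rewrite eqxx (negbTE hca) (negbTE hcb) (negbTE hba) eqxx.
- by rewrite eqxx (negbTE hca) (negbTE hcb) (negbTE hba) eqxx.
- by rewrite (negbTE Ha) (negbTE Hb).
Qed.

Opaque actT upd swapIdx.
Lemma braid_pt (x : Ten n d) s p q r :
  actT a b (actT b c (actT a b x)) (upd s p q r) =
  actT b c (actT a b (actT b c x)) (upd s p q r).
Proof.
pose X := fun s : Idx n d => x s.
have H1 : forall s, actT a b x s = Tp a b X s by apply: actT_Tp.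
have H1' : forall s, actT b c x s = Tp b c X s by apply: actT_Tp.
have H2 := actT_Tp b c (actT a b x) (Tp a b X) H1.
have H2' := actT_Tp a b (actT b c x) (Tp b c X) H1'.
have H3 := actT_Tp a b _ _ H2. have H3' := actT_Tp b c _ _ H2'.
apply: etrans (H3 _) _; apply: etrans _ (esym (H3' _)).
rewrite /Tp.
repeat match goal with
| |- context [swapIdx a b (upd ?s ?x ?y ?z)] => rewrite (swap_ab s x y z)
| |- context [swapIdx b c (upd ?s ?x ?y ?z)] => rewrite (swap_bc s x y z)
| |- context [@fun_of_fin _ _ _ (upd ?s ?x ?y ?z) a] => rewrite (upd_a s x y z)
| |- context [@fun_of_fin _ _ _ (upd ?s ?x ?y ?z) b] => rewrite (upd_b s x y z)
| |- context [@fun_of_fin _ _ _ (upd ?s ?x ?y ?z) c] => rewrite (upd_c s x y z)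
end.
exact: (@braid_alg _ hv ht hv_neq0 n p q r (fun i j k => X (upd s i j k))).
Qed.

End Braid.

Theorem mainTheorem8 (n d : nat) :
  [/\ (forall (a b : 'I_d) (x : Ten n d), val b = (val a).+1 ->
         actT a b (actT a b x) = (hv * ht - hv^-1 * ht) *: actT a b x + ht ^+ 2 *: x),
      (forall (a b c : 'I_d) (x : Ten n d), val b = (val a).+1 -> val c = (val b).+1 ->
         actT a b (actT b c (actT a b x)) = actT b c (actT a b (actT b c x)))
    & (forall (a b c e : 'I_d) (x : Ten n d), val b = (val a).+1 -> val e = (val c).+1 ->
         ((val b < val c)%N || (val e < val a)%N) ->
         actT c e (actT a b x) = actT a b (actT c e x))].
Proof.
have h := hv_neq0.
split.
- move=> a b x Hb; apply/ffunP => s.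
  pose X := fun s : Idx n d => x s.
  have H1 : forall s, actT a b x s = Tp a b X s by apply: actT_Tp.
  have H2 := actT_Tp a b _ _ H1.
  apply: etrans (H2 s) _.
  apply: etrans _ (esym (@addE n d _ _ s)).
  rewrite {1}sclE {1}sclE.
  apply: etrans _ (congr1 (fun w => (hv * ht - hv^-1 * ht) * w + ht ^+ 2 * x s) (esym (H1 s))).
  rewrite /Tp swapK.
  have [E1 E2] := @swapE n d a b s; rewrite E1 E2.
  exact: (@quad_alg _ hv ht hv_neq0 n (s a) (s b) (X s) (X (swapIdx a b s))).
- move=> a b c x Hb Hc; apply/ffunP => s.
  have hab : a != b by apply/eqP => E; subst; lia.
  have hbc : b != c by apply/eqP => E; subst; lia.
  have hac : a != c by apply/eqP => E; subst; lia.
  have L := @braid_pt n d a b c hab hbc hac x s (s a) (s b) (s c).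
  rewrite (@upd_eta n d a b c s) in L; exact: L.
- move=> a b c e x Hb He Hor; apply/ffunP => s.
  have hac : a != c by apply/eqP => E; subst; lia.
  have hae : a != e by apply/eqP => E; subst; lia.
  have hbc : b != c by apply/eqP => E; subst; lia.
  have hbe : b != e by apply/eqP => E; subst; lia.
  have Hce : forall t : Idx n d, swapIdx c e t a = t a /\ swapIdx c e t b = t b.
    by move=> t; rewrite !ffunE !tpermD // eq_sym.
  have Hab : forall t : Idx n d, swapIdx a b t c = t c /\ swapIdx a b t e = t e.
    by move=> t; rewrite !ffunE !tpermD // ?(eq_sym c) ?(eq_sym e).
  have Hcomm : swapIdx a b (swapIdx c e s) = swapIdx c e (swapIdx a b s).
    apply/ffunP => k; rewrite !ffunE.
    have hca : c != a by rewrite eq_sym.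
    have hea : e != a by rewrite eq_sym.
    have hcb : c != b by rewrite eq_sym.
    have heb : e != b by rewrite eq_sym.
    case: (tpermP a b k) => [->|->|/eqP Ha /eqP Hb'].
    - by rewrite (tpermD (x:=c) (y:=e) (z:=b)) // (tpermD (x:=c) (y:=e) (z:=a)) // tpermL.
    - by rewrite (tpermD (x:=c) (y:=e) (z:=b)) // (tpermD (x:=c) (y:=e) (z:=a)) // tpermR.
    - case: (tpermP c e k) => [_|_|_ _].
      + by rewrite (tpermD (x:=a) (y:=b) (z:=e)).
      + by rewrite (tpermD (x:=a) (y:=b) (z:=c)).
      + by rewrite (tpermD (x:=a) (y:=b) (z:=k)) // eq_sym.
  pose X := fun s : Idx n d => x s.
  have H1 : forall s, actT a b x s = Tp a b X s by apply: actT_Tp.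
  have H1' : forall s, actT c e x s = Tp c e X s by apply: actT_Tp.
  have H2 := actT_Tp c e _ _ H1. have H2' := actT_Tp a b _ _ H1'.
  apply: etrans (H2 s) _; apply: etrans _ (esym (H2' s)).
  rewrite /Tp Hcomm.
  have [E1 E2] := Hce s; have [E3 E4] := Hab s.
  rewrite E1 E2 E3 E4.
  exact: comm_alg.
Qed.
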